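(* For any matrix $A\in\mathbb{R}^{m\times n}$ and $p\in\mathbb{Q}\cap(2,\infty)$, the dual problem of the maximization problem defining $\|A\|_{p_v}$ (given in the context) is $$ \begin{array}{lll} \|A\|_{p_v}= &\min & u_1+ u_2+\theta_p\sum_{i=1}^{m+n} t_i \\ &\textnormal{s.t.} & {v_i}^{p/(p-2)}\le t_i {u_1}^{2/(p-2)}\quad i=1,2,\dots, m \\ && {v_i}^{p/(p-2)}\le t_i {u_2}^{2/(p-2)}\quad i=m+1,m+2,\dots, m+n\\ && u_1\ge0, \,u_2\ge 0, \, \boldsymbol{t}\ge {\bf 0},\, D(\boldsymbol{v})\succeq \begin{pmatrix} O & A/2 \\ A^{\textnormal{T}}/2 & O \end{pmatrix}, \end{array} $$ where $\theta_p:=(2/p)^{2/(p-2)}-(2/p)^{p/(p-2)}>0$ when $p\in(2,\infty)$, and strong duality holds so the optimal value equals $\|A\|_{p_v}$.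
   Context: For $A\in\mathbb{R}^{m\times n}$ and $p\in\mathbb{Q}\cap(2,\infty)$, $$ \|A\|_{p_v}:= \max \left\{\left\langle \begin{pmatrix} O & A/2 \\ A^{\textnormal{T}}/2 & O \end{pmatrix}, X\right\rangle: \sum_{i=1}^m|x_{i i}|^{p/2} \le 1,\ \sum_{i=m+1}^{m+n}|x_{ii}|^{p/2} \le 1,\ X \succeq O\right\}, $$ with $X\in\mathbb{R}^{(m+n)\times(m+n)}$ symmetric. $D(\boldsymbol{v})$ denotes the diagonal matrix with diagonal vector $\boldsymbol{v}\in\mathbb{R}^{m+n}$; $\succeq$ is the positive semidefinite order. *)

(* Defs.v *)
From HB Require Import structures.
From mathcomp Require Import all_boot all_order all_algebra.
From mathcomp Require Import boolp classical_sets reals exp.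
Set Implicit Arguments. Unset Strict Implicit. Unset Printing Implicit Defensive.
Import Order.TTheory GRing.Theory Num.Theory.
Local Open Scope ring_scope.
Local Open Scope classical_set_scope.

Section Defs.
Variable R : realType.

Definition psd (k : nat) (X : 'M[R]_k) : Prop :=
  X^T = X /\ forall x : 'cV[R]_k, 0 <= (x^T *m X *m x) 0 0.

Definition frob (k : nat) (B X : 'M[R]_k) : R := \tr (B^T *m X).

Definition bigA (m n : nat) (A : 'M[R]_(m, n)) : 'M[R]_(m + n) :=
  block_mx 0 (2^-1 *: A) (2^-1 *: A^T) 0.

Definition pv_feasible {m n : nat} (p : rat) (X : 'M[R]_(m + n)) : Prop :=
  psd X /\
  \sum_(i < m + n | (i < m)%N) `|X i i| `^ (ratr p / 2) <= 1 /\
  \sum_(i < m + n | (m <= i)%N) `|X i i| `^ (ratr p / 2) <= 1.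

Definition pv_norm (m n : nat) (A : 'M[R]_(m, n)) (p : rat) : R :=
  sup [set frob (bigA A) X | X in pv_feasible p].

Definition theta_p (p : rat) : R :=
  (2 / ratr p) `^ (2 / (ratr p - 2)) - (2 / ratr p) `^ (ratr p / (ratr p - 2)).

Definition dual_feasible (m n : nat) (A : 'M[R]_(m, n)) (p : rat)
  (u1 u2 : R) (t v : 'rV[R]_(m + n)) : Prop :=
  (forall i : 'I_(m + n), (i < m)%N ->
     v 0 i `^ (ratr p / (ratr p - 2)) <= t 0 i * u1 `^ (2 / (ratr p - 2))) /\
  (forall i : 'I_(m + n), (m <= i)%N ->
     v 0 i `^ (ratr p / (ratr p - 2)) <= t 0 i * u2 `^ (2 / (ratr p - 2))) /\
  0 <= u1 /\ 0 <= u2 /\ (forall i, 0 <= t 0 i) /\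
  psd (diag_mx v - bigA A).

Definition dual_obj (m n : nat) (p : rat) (u1 u2 : R) (t : 'rV[R]_(m + n)) : R :=
  u1 + u2 + theta_p p * \sum_i t 0 i.

End Defs.

(* Main.v *)
From Pilot Require Import Defs.
From HB Require Import structures.
From mathcomp Require Import all_boot all_order all_algebra.
From mathcomp Require Import boolp classical_sets reals exp.
From mathcomp Require Import topology normedtype matrix_normedtype derive.
From mathcomp Require Import ring lra.
Import Order.TTheory GRing.Theory Num.Theory.
Local Open Scope ring_scope.

Module PilotHelpers.
Set Implicit Arguments. Unset Strict Implicit. Unset Printing Implicit Defensive.

Section Psd.
Variable R : realType.
Variable k : nat.
Implicit Types X P : 'M[R]_k.

Definition bf X (x y : 'cV[R]_k) : R := (x^T *m X *m y) 0 0.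
Definition ev (i : 'I_k) : 'cV[R]_k := delta_mx i 0.

Lemma bfDl X x y z : bf X (x + y) z = bf X x z + bf X y z.
Proof. by rewrite /bf linearD /= !mulmxDl mxE. Qed.
Lemma bfDr X x y z : bf X z (x + y) = bf X z x + bf X z y.
Proof. by rewrite /bf !mulmxDr mxE. Qed.
Lemma bfZl X a x z : bf X (a *: x) z = a * bf X x z.
Proof. by rewrite /bf linearZ /= -!scalemxAl mxE. Qed.
Lemma bfZr X a x z : bf X z (a *: x) = a * bf X z x.
Proof. by rewrite /bf -!scalemxAr mxE. Qed.
Lemma bf_sym X x y : X^T = X -> bf X x y = bf X y x.
Proof.
move=> sX; rewrite /bf.
have -> : (x^T *m X *m y) 0 0 = ((x^T *m X *m y)^T) 0 0 by rewrite [RHS]mxE.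
rewrite !trmx_mul trmxK sX mulmxA. done.
Qed.
Lemma bf_ev X i j : bf X (ev i) (ev j) = X i j.
Proof. by rewrite /bf /ev trmx_delta -mulmxA -colE -rowE !mxE. Qed.

Lemma psd_ge0 X x : psd X -> 0 <= bf X x x.
Proof. by case=> _; apply. Qed.

Lemma psd_diag_ge0 X i : psd X -> 0 <= X i i.
Proof. by move=> pX; rewrite -bf_ev psd_ge0. Qed.

Lemma psd_expand X z i t : X^T = X ->
  bf X (z + t *: ev i) (z + t *: ev i) = bf X z z + 2 * t * bf X (ev i) z + t ^+ 2 * X i i.
Proof.
move=> sX; rewrite !bfDl !bfDr !bfZl !bfZr bf_ev (bf_sym _ z) //.
by rewrite mulrA -expr2; ring.
Qed.

Lemma psd_diag0 X i z : psd X -> X i i = 0 -> bf X (ev i) z = 0.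
Proof.
move=> [sX pX] Xii; set b := bf X (ev i) z.
have H t : 0 <= bf X z z + 2 * t * b.
  by have := pX (z + t *: ev i); rewrite /bf -/(bf X _ _) psd_expand // Xii mulr0 addr0.
apply/eqP; apply: contraT => b0.
have := H (- (bf X z z + 1) / (2 * b)).
have -> : 2 * (- (bf X z z + 1) / (2 * b)) * b = - (bf X z z + 1).
  by field; rewrite b0.
lra.
Qed.

Lemma psd_offdiag0 X i j : psd X -> X i i = 0 -> X i j = 0.
Proof. by move=> pX Xii; rewrite -bf_ev psd_diag0. Qed.
Arguments psd_offdiag0 {X i} j.
Arguments psd_diag_ge0 {X} i.


Lemma bfMD X Y x y : bf (X + Y) x y = bf X x y + bf Y x y.
Proof. by rewrite /bf mulmxDr mulmxDl mxE. Qed.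
Lemma bfMZ a X x y : bf (a *: X) x y = a * bf X x y.
Proof. by rewrite /bf -scalemxAr -scalemxAl mxE. Qed.
Lemma bfMN X x y : bf (- X) x y = - bf X x y.
Proof. by rewrite -scaleN1r bfMZ mulN1r. Qed.

Lemma frobD P X Y : frob P (X + Y) = frob P X + frob P Y.
Proof. by rewrite /frob mulmxDr mxtraceD. Qed.
Lemma frobZ P a X : frob P (a *: X) = a * frob P X.
Proof. by rewrite /frob -scalemxAr mxtraceZ. Qed.

Lemma frob_rank1 P w : frob P (w *m w^T) = bf P^T w w.
Proof. by rewrite /frob mulmxA mxtrace_mulC mulmxA trace_mx11. Qed.

Lemma psd_X0 X : psd X -> (forall j, X j j = 0) -> X = 0.
Proof. by move=> pX H; apply/matrixP => i j; rewrite mxE (psd_offdiag0 j pX (H i)). Qed.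

Arguments psd_X0 {X}.
Lemma frob0 P : frob P 0 = 0.
Proof. by rewrite /frob mulmx0 mxtrace0. Qed.

Definition nzd X := [set j | X j j != 0].

Lemma frob_psd_ge0 P X : psd P -> psd X -> 0 <= frob P X.
Proof.
move=> [sP pP].
suff H (N : nat) : forall X, psd X -> (#|nzd X| <= N)%N -> 0 <= frob P X.
  by move=> pX; apply: (H _ X pX (leqnn _)).
elim: N => [|N IH] {}X pX.
  rewrite leqn0 cards_eq0 => /eqP S0.
  rewrite (psd_X0 pX) ?frob0 // => j; apply/eqP; apply: contraT => Xj.
  have : j \in nzd X by rewrite inE.
  by rewrite S0 inE.
rewrite leq_eqVlt ltnS => /orP [/eqP cS|]; last exact: IH.
have : (0 < #|nzd X|)%N by rewrite cS.
case/card_gt0P => i; rewrite inE => Xi0.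
have Xi : 0 < X i i by rewrite lt_def Xi0 psd_diag_ge0.
have [sX pX'] := pX.
pose w := X *m ev i.
pose X' := X - (X i i)^-1 *: (w *m w^T).
have wE z : bf (w *m w^T) z z = (bf X (ev i) z) ^+ 2.
  have -> : bf (w *m w^T) z z = (z^T *m w) 0 0 * (w^T *m z) 0 0.
    by rewrite /bf !mulmxA -mulmxA mxE big_ord1.
  rewrite /w trmx_mul sX mulmxA -/(bf X z (ev i)) -/(bf X (ev i) z).
  by rewrite bf_sym // expr2.
have wwE j : (w *m w^T) j j = X j i ^+ 2.
  by rewrite -!bf_ev wE bf_sym // bf_ev -(bf_ev X j i) expr2.
have pXp : psd X'.
  split.
    by rewrite /X' linearB /= linearZ /= trmx_mul trmxK sX.
  move=> z; rewrite -/(bf X' z z) /X' bfMD bfMN bfMZ wE.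
  have := pX' (z + (- (bf X (ev i) z) / X i i) *: ev i).
  rewrite -/(bf X _ _) psd_expand //.
  set b := bf X (ev i) z.
  rewrite -addrA.
  have -> : 2 * (- b / X i i) * b + (- b / X i i) ^+ 2 * X i i = - ((X i i)^-1 * b ^+ 2).
    by field; rewrite gt_eqF.
  done.
have sub : nzd X' \subset nzd X :\ i.
  apply/fintype.subsetP => j.
  have E : X' j j = X j j - (X i i)^-1 * X j i ^+ 2 by rewrite -wwE /X' !mxE.
  rewrite !inE E.
  have [->|_] := eqVneq j i.
    have -> : X i i - (X i i)^-1 * X i i ^+ 2 = 0 by field; rewrite gt_eqF.
    by rewrite eqxx.
  rewrite /=; apply: contra => /eqP Xj.
  have -> : X j i = 0 by rewrite (psd_offdiag0 i pX Xj).
  by rewrite Xj expr0n /= mulr0 subr0.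
have le := subset_leq_card sub.
have := IH X' pXp.
have : (#|nzd X'| <= N)%N.
  apply: (leq_trans le).
  have := cardsD1 i (nzd X); rewrite cS inE Xi0 /= add1n.
  by case=> ->.
move=> h /(_ h) h'.
have -> : X = X' + (X i i)^-1 *: (w *m w^T) by rewrite /X' subrK.
rewrite frobD frobZ frob_rank1 sP; apply: addr_ge0 => //.
by apply: mulr_ge0; [rewrite invr_ge0 ltW | apply: pP].
Qed.


Lemma frobE P X : frob P X = \sum_i \sum_j P i j * X i j.
Proof.
rewrite /frob /mxtrace (exchange_big) /=; apply: eq_bigr => i _.
rewrite mxE; apply: eq_bigr => j _; by rewrite mxE.
Qed.

Lemma bfE X x y : bf X x y = \sum_i \sum_j x i 0 * X i j * y j 0.
Proof.
rewrite /bf mxE exchange_big /=; apply: eq_bigr => j _.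
rewrite mxE mulr_suml; apply: eq_bigr => i _; by rewrite !mxE.
Qed.

Lemma psd_entry_bound X i j : psd X -> 2 * `|X i j| <= X i i + X j j.
Proof.
move=> [sX pX].
have H t : 0 <= X j j + 2 * t * X i j + t ^+ 2 * X i i.
  have := pX (ev j + t *: ev i); rewrite -/(bf X _ _) psd_expand // !bf_ev.
  done.
have h1 := H 1; have h2 := H (-1).
rewrite expr1n mul1r mulr1 in h1; rewrite sqrrN expr1n mul1r in h2.
have [h|h] := lerP 0 (X i j).
  rewrite ger0_norm //; lra.
rewrite ltr0_norm //; lra.
Qed.

End Psd.

Section BigA.
Variable R : realType.
Variables m n : nat.
Variable A : 'M[R]_(m, n).

Lemma bigA_sym : (bigA A)^T = bigA A.
Proof.
by rewrite /bigA tr_block_mx !trmx0 !linearZ /= trmxK.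
Qed.

Lemma bigA_blk (i j : 'I_(m + n)) : (i < m)%N = (j < m)%N -> bigA A i j = 0.
Proof.
rewrite /bigA.
rewrite -(splitK i) -(splitK j).
case: (split i) => i'; case: (split j) => j' /=.
- by rewrite block_mxEul mxE.
- by rewrite ltn_ord ltnNge leq_addr.
- by rewrite ltn_ord ltnNge leq_addr.
- by rewrite block_mxEdr mxE.
Qed.

End BigA.


Section Ineq.
Variable R : realType.
Implicit Types a b x s : R.

Lemma bern_concave s x : 0 < s <= 1 -> 0 <= x -> (1 + x) `^ s <= 1 + s * x.
Proof.
move=> /andP[s0 s1] x0.
have [->|s1'] := eqVneq s 1; first by rewrite powRr1 ?mul1r //; lra.
have slt : s < 1 by rewrite lt_neqAle s1' s1.
have := @conjugate_powR R ((1 + x) `^ s) 1 s^-1 (1 - s)^-1 (powR_ge0 _ _) ler01.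
rewrite invr_gt0 s0 invr_gt0 subr_gt0 slt !invrK => /(_ isT isT).
rewrite addrC subrK => /(_ erefl).
by rewrite mulr1 -powRrM mulfV ?gt_eqF // powRr1 ?powR1 //; lra.
Qed.

Lemma tangent_powR q a b : 1 < q -> 0 <= a <= b ->
  b `^ q <= a `^ q + q * (b - a) * b `^ (q - 1).
Proof.
move=> q1 /andP[a0 ab].
have b0 : 0 <= b by apply: le_trans ab.
have q0 : 0 < q by apply: lt_trans q1.
have q10 : 0 < q - 1 by rewrite subr_gt0.
have := @conjugate_powR R a (b `^ (q - 1)) q (q / (q - 1)) a0 (powR_ge0 _ _) q0.
rewrite divr_gt0 // => /(_ isT).
have -> : q^-1 + (q / (q - 1))^-1 = 1 by field; rewrite !gt_eqF.
move=> /(_ erefl).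
rewrite -powRrM mulrCA mulfV ?gt_eqF // mulr1 invf_div.
move=> H.
have bb : b `^ q = b * b `^ (q - 1) by rewrite mulr_powRB1.
rewrite {1}bb.
have : q * (a * b `^ (q - 1)) <= a `^ q + (q - 1) * b `^ q.
  have -> : a `^ q + (q - 1) * b `^ q = q * (a `^ q / q + b `^ q * ((q - 1) / q)).
    by field; rewrite gt_eqF.
  by rewrite ler_pM2l.
rewrite bb => H2; lra.
Qed.


Definition thetar r : R := (2 / r) `^ (2 / (r - 2)) - (2 / r) `^ (r / (r - 2)).

Lemma thetarE r : 2 < r -> thetar r = (2 / r) `^ (2 / (r - 2)) * (1 - 2 / r).
Proof.
move=> r2; have r0 : 0 < r by apply: lt_trans r2.
have r20 : 0 < r - 2 by rewrite subr_gt0.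
rewrite /thetar.
have -> : r / (r - 2) = 2 / (r - 2) + 1 by field; rewrite gt_eqF.
rewrite powRD; last by rewrite implybE mulf_neq0 ?orbT // ?invr_eq0 gt_eqF.
by rewrite powRr1 ?divr_ge0 ?ltW //; ring.
Qed.

Lemma thetar_gt0 r : 2 < r -> 0 < thetar r.
Proof.
move=> r2; have r0 : 0 < r by apply: lt_trans r2.
rewrite thetarE //; apply: mulr_gt0; first by apply: powR_gt0; rewrite divr_gt0.
by rewrite subr_gt0 ltr_pdivrMr // mul1r.
Qed.

Lemma young_term r v x u t : 2 < r -> 0 <= v -> 0 <= x -> 0 <= u -> 0 <= t ->
  v `^ (r / (r - 2)) <= t * u `^ (2 / (r - 2)) ->
  v * x <= u * x `^ (r / 2) + thetar r * t.
Proof.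
move=> r2 v0 x0 u0 t0 H.
have r0 : 0 < r by apply: lt_trans r2.
have r20 : 0 < r - 2 by rewrite subr_gt0.
have th0 := @thetar_gt0 r r2.

have e0 : 2 / (r - 2) != 0 by rewrite gt_eqF // divr_gt0.
have [u0'|upos] := eqVneq u 0.
  move: H; rewrite u0' powR0 // mulr0 => H.
  have : v `^ (r / (r - 2)) = 0 by apply/eqP; rewrite eq_le H powR_ge0.
  move/powR_eq0_eq0 => ->; rewrite mul0r mul0r add0r.
  by apply: mulr_ge0 => //; apply: ltW.
have u1 : 0 < u by rewrite lt_def upos u0.
set q := r / 2; set qs := r / (r - 2); set e := 2 / (r - 2).
have q0 : 0 < q by rewrite divr_gt0.
have qs0 : 0 < qs by rewrite divr_gt0.
pose c := (q * u) `^ (2 / r).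
have c0 : 0 < c by apply: powR_gt0; rewrite mulr_gt0.
have := @conjugate_powR R (x * c) (v / c) q qs (mulr_ge0 x0 (ltW c0))
  (divr_ge0 v0 (ltW c0)) q0 qs0.
have -> : q^-1 + qs^-1 = 1 by rewrite /q /qs; field; rewrite !gt_eqF.
move=> /(_ erefl).
have -> : x * c * (v / c) = v * x by field; rewrite gt_eqF.
rewrite powRM ?(ltW c0) // powRM ?(ltW c0) ?invr_ge0 //.
have -> : c `^ q = q * u.
  rewrite /c -powRrM.
  have -> : 2 / r * q = 1 by rewrite /q; field; rewrite gt_eqF.
  by rewrite powRr1 // mulr_ge0 // ltW.
have -> : c^-1 `^ qs = (q `^ e * u `^ e)^-1.
  rewrite -powR_inv1 ?(ltW c0) // -powRrM mulN1r powRN /c -powRrM.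
  rewrite -powRM ?ltW //; congr (_ `^ _)^-1.
  by rewrite /qs /e; field; rewrite !gt_eqF.
have -> : x `^ q * (q * u) / q = u * x `^ q by field; rewrite gt_eqF.
move=> Y; apply: (le_trans Y); rewrite lerD2l.
have qe0 : 0 < q `^ e by apply: powR_gt0.
have ue0 : 0 < u `^ e by apply: powR_gt0.
have -> : v `^ qs * (q `^ e * u `^ e)^-1 / qs = v `^ qs / (u `^ e) * ((q `^ e)^-1 / qs).
  by field; rewrite !gt_eqF.
have -> : thetar r * t = t * ((q `^ e)^-1 / qs).
  rewrite thetarE //.
  have -> : (2 / r) `^ (2 / (r - 2)) = (q `^ e)^-1.
    apply: (@mulIf _ (q `^ e)); first by rewrite gt_eqF.
    rewrite mulVf ?gt_eqF // -powRM ?divr_ge0 ?ltW //.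
    have -> : 2 / r * q = 1 by rewrite /q; field; rewrite gt_eqF.
    by rewrite powR1.
  by rewrite /qs; field; rewrite !gt_eqF.
apply: ler_wpM2r; first by apply: divr_ge0; [rewrite invr_ge0 ltW | rewrite ltW].
by rewrite ler_pdivrMr.
exact: (ltW c0).
Qed.

End Ineq.


Import numFieldTopology.Exports numFieldNormedType.Exports.
Local Open Scope classical_set_scope.

Section Cont.
Variable R : realType.

Lemma cont_sum {T : topologicalType} {I : finType} (P : pred I) (f : I -> T -> R) :
  (forall i, continuous (f i)) -> continuous (fun t => \sum_(i | P i) f i t).
Proof.
move=> H.
suff S (s : seq I) : continuous (fun t => \sum_(i <- s | P i) f i t) by apply: S.
elim: s => [|a s IH].
  have -> : (fun t => \sum_(i <- [::] | P i) f i t) = fun=> 0.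
    by apply/funext => ?; rewrite big_nil.
  exact: cst_continuous.
case Pa: (P a).
  have -> : (fun t => \sum_(i <- a :: s | P i) f i t) =
     (fun t => f a t + \sum_(i <- s | P i) f i t).
    by apply/funext => ?; rewrite big_cons Pa.
  by move=> t; apply: (@continuousD _ _ _ (f a) (fun t => \sum_(i <- s | P i) f i t)); [apply: H | apply: IH].
have -> : (fun t => \sum_(i <- a :: s | P i) f i t) = (fun t => \sum_(i <- s | P i) f i t).
  by apply/funext => ?; rewrite big_cons Pa.
exact: IH.
Qed.

Lemma cont_abspow (c : R) : 0 < c -> continuous (fun x : R => `|x| `^ c).
Proof.
move=> c0 x; have [->|x0] := eqVneq x 0.
  apply/cvgrPdist_lt => e e0 /=.
  rewrite normr0 powR0 ?gt_eqF //.
  apply/nbhs_ballP; exists (e `^ c^-1); first by apply: powR_gt0.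
  move=> y; rewrite /ball /= sub0r normrN => Hy.
  rewrite sub0r normrN ger0_norm ?powR_ge0 //.
  have -> : e = (e `^ c^-1) `^ c.
    by rewrite -powRrM mulVf ?gt_eqF // powRr1 // ltW.
  by apply: gt0_ltr_powR => //; rewrite ?nnegrE ?powR_ge0.
have nx : 0 < `|x| by rewrite normr_gt0.
apply: (@continuous_comp _ _ _ (fun x : R => `|x|) (fun y => y `^ c)).
  exact: norm_continuous.
apply: differentiable_continuous; rewrite -derivable1_diffP.
by apply: derivable_powR; rewrite in_itv /= andbT.
Qed.

End Cont.


Section Exist.
Variable R : realType.

Lemma cont_cmul {T : topologicalType} (c : R) (f : T -> R) :
  continuous f -> continuous (fun t => c * f t).
Proof.
move=> H t; exact: cvgMl_tmp (H t).
Qed.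

Lemma cont_entry (k : nat) (i j : 'I_k) :
  continuous (fun r : 'rV[R]_(k * k) => vec_mx r i j).
Proof.
have -> : (fun r : 'rV[R]_(k * k) => vec_mx r i j) = (fun r => r 0 (mxvec_index i j)).
  by apply/funext => r; rewrite mxE.
exact: coord_continuous.
Qed.

Lemma feas_diag_le1 m n (p : rat) (X : 'M[R]_(m + n)) i : (2 < ratr p :> R) ->
  pv_feasible p X -> X i i <= 1.
Proof.
move=> p2 [pX [HI HJ]].
have q0 : 0 < ratr p / 2 :> R by rewrite divr_gt0 // (lt_trans _ p2).
have d0 := psd_diag_ge0 i pX.
have key : `|X i i| `^ (ratr p / 2) <= 1.
  case: (ltnP i m) => im.
    apply: le_trans HI; rewrite (bigD1 i) //= lerDl.
    by apply: sumr_ge0 => *; apply: powR_ge0.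
  apply: le_trans HJ; rewrite (bigD1 i) //= lerDl.
  by apply: sumr_ge0 => *; apply: powR_ge0.
rewrite leNgt; apply/negP => H1.
move: key; rewrite leNgt => /negP; apply.
rewrite ger0_norm //.
have h : 1 `^ (ratr p / 2) < X i i `^ (ratr p / 2).
  by apply: (gt0_ltr_powR q0) => //; rewrite nnegrE // ltW.
by move: h; rewrite powR1.
Qed.

Lemma feas_entry_le1 m n (p : rat) (X : 'M[R]_(m + n)) i j : (2 < ratr p :> R) ->
  pv_feasible p X -> `|X i j| <= 1.
Proof.
move=> p2 F.
have := psd_entry_bound i j F.1.
have := feas_diag_le1 i p2 F; have := feas_diag_le1 j p2 F; lra.
Qed.


Lemma closed_pre_eq {T : topologicalType} (f : T -> R) (c : R) :
  continuous f -> closed [set t | f t = c].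
Proof. by move=> fc; apply: (@preimage_closed _ _ f [set x | x = c]) => //; exact: closed_eq. Qed.
Lemma closed_pre_le {T : topologicalType} (f : T -> R) (c : R) :
  continuous f -> closed [set t | f t <= c].
Proof. by move=> fc; apply: (@preimage_closed _ _ f [set x | x <= c]) => //; exact: closed_le. Qed.
Lemma closed_pre_ge {T : topologicalType} (f : T -> R) (c : R) :
  continuous f -> closed [set t | c <= f t].
Proof. by move=> fc; apply: (@preimage_closed _ _ f [set x | c <= x]) => //; exact: closed_ge. Qed.

Lemma pv_exists_max m n (A : 'M[R]_(m, n)) (p : rat) : (2 < ratr p :> R) ->
  exists X : 'M[R]_(m + n), pv_feasible p X /\
    forall Y : 'M[R]_(m + n), pv_feasible p Y -> frob (bigA A) Y <= frob (bigA A) X.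
Proof.
move=> p2.
have q0 : 0 < ratr p / 2 :> R by rewrite divr_gt0 // (lt_trans _ p2).
pose Fr : set 'rV[R]_((m + n) * (m + n)) := [set r | pv_feasible p (vec_mx r)].
pose G := fun r : 'rV[R]_((m + n) * (m + n)) => frob (bigA A) (vec_mx r).
have vm0 : vec_mx (0 : 'rV[R]_((m + n) * (m + n))) = 0.
  by apply/matrixP => i j; rewrite !mxE.
have Fr0 : Fr !=set0.
  exists 0; rewrite /Fr /= vm0; split; first split.
  - by rewrite trmx0.
  - by move=> x; rewrite mulmx0 mul0mx mxE.
  by split; rewrite big1 // => i _; rewrite mxE normr0 powR0 ?gt_eqF.
have Gc : continuous G.
  have -> : G = fun r => \sum_i \sum_j bigA A i j * vec_mx r i j.
    by apply/funext => r; rewrite /G frobE.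
  apply: cont_sum => i; apply: cont_sum => j; apply: cont_cmul; exact: cont_entry.
have Fcl : closed Fr.
  have -> : Fr = (\bigcap_(ij in setT) [set r | vec_mx r ij.2 ij.1 - vec_mx r ij.1 ij.2 = 0])
     `&` (\bigcap_(x in setT) [set r | 0 <= bf (vec_mx r) x x])
     `&` [set r | \sum_(i < m + n | (i < m)%N) `|vec_mx r i i| `^ (ratr p / 2) <= 1]
     `&` [set r | \sum_(i < m + n | (m <= i)%N) `|vec_mx r i i| `^ (ratr p / 2) <= 1].
    apply/seteqP; split => r /=.
      move=> [[sX pX] [HI HJ]]; split => //; split => //; split.
        move=> ij _ /=; apply/eqP; rewrite subr_eq0; apply/eqP.
        by rewrite -[in LHS]sX mxE.
      by move=> x _; apply: pX.
    move=> [[[S Q] HI] HJ]; split => //; split.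
      apply/matrixP => i j; rewrite mxE; apply/eqP; rewrite -subr_eq0; apply/eqP.
      by apply: (S (i, j)).
    by move=> x; apply: (Q x).
  apply: closedI; [apply: closedI; [apply: closedI|]|].
  - apply: closed_bigI => ij _; apply: closed_pre_eq.
    by move=> r; apply: continuousB; apply: cont_entry.
  - apply: closed_bigI => x _; apply: closed_pre_ge.
    have -> : (fun r => bf (vec_mx r) x x) = fun r => \sum_i \sum_j (x i 0 * x j 0) * vec_mx r i j.
      apply/funext => r; rewrite bfE; apply: eq_bigr => i _; apply: eq_bigr => j _; ring.
    apply: cont_sum => i; apply: cont_sum => j; apply: cont_cmul; exact: cont_entry.
  - apply: closed_pre_le; apply: cont_sum => i.
    move=> r; apply: (@continuous_comp _ _ _ (fun r => vec_mx r i i) (fun x => `|x| `^ (ratr p / 2))).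
      exact: cont_entry.
    exact: cont_abspow.
  - apply: closed_pre_le; apply: cont_sum => i.
    move=> r; apply: (@continuous_comp _ _ _ (fun r => vec_mx r i i) (fun x => `|x| `^ (ratr p / 2))).
      exact: cont_entry.
    exact: cont_abspow.
have Fb : bounded_set Fr.
  rewrite /bounded_set /=.

  rewrite /bounded_near; near=> M => r Fr_r /=.
  apply: (@le_trans _ _ 1); last by near: M; apply: nbhs_pinfty_ge.
  have -> : `|r| = mx_norm r by [].
  rewrite mx_normrE; apply: bigmax_le => // -[i0 l] _ /=.
  rewrite ord1; case/mxvec_indexP: l => i j.
  have -> : r 0 (mxvec_index i j) = vec_mx r i j by rewrite mxE.
  exact: feas_entry_le1 p2 Fr_r.
have cpt : compact Fr by apply: bounded_closed_compact.
have [c cF cmax] := compact_EVT_max Fr0 cpt (continuous_subspaceT Gc).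
exists (vec_mx c); split; first by rewrite inE in cF.
move=> Y FY; have := cmax (mxvec Y); rewrite /G mxvecK; apply.
by rewrite inE /Fr /= mxvecK.
Unshelve. all: by end_near.
Qed.

End Exist.



Lemma scale_psd (R : realType) k (Y : 'M[R]_k) (d : 'I_k -> R) :
  psd Y -> psd (\matrix_(i, j) (d i * d j * Y i j)).
Proof.
move=> [sY pY]; split.
  apply/matrixP => i j; rewrite !mxE -{1}sY mxE; ring.
move=> x; rewrite -/(bf _ x x).
have := pY (\col_i (d i * x i 0)); rewrite -/(bf _ _ _) !bfE => H.
apply: (le_trans H); rewrite le_eqVlt; apply/orP; left; apply/eqP.
apply: eq_bigr => i _; apply: eq_bigr => j _; rewrite !mxE; ring.
Qed.


Lemma psd_add (R : realType) k (X Y : 'M[R]_k) : psd X -> psd Y -> psd (X + Y).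
Proof.
move=> [sX pX] [sY pY]; split; first by rewrite linearD /= sX sY.
by move=> x; rewrite -/(bf _ x x) bfMD addr_ge0 //; [apply: pX | apply: pY].
Qed.

Lemma psd_scale (R : realType) k (c : R) (X : 'M[R]_k) : 0 <= c -> psd X -> psd (c *: X).
Proof.
move=> c0 [sX pX]; split; first by rewrite linearZ /= sX.
by move=> x; rewrite -/(bf _ x x) bfMZ mulr_ge0 //; apply: pX.
Qed.

Lemma psd_rank1 (R : realType) k (z : 'cV[R]_k) : psd (z *m z^T).
Proof.
split; first by rewrite trmx_mul trmxK.
move=> x; rewrite !mulmxA -mulmxA mxE big_ord1.
have -> : (z^T *m x) 0 0 = (x^T *m z) 0 0.
  have -> : (z^T *m x) 0 0 = ((z^T *m x)^T) 0 0 by rewrite [RHS]mxE.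
  by rewrite trmx_mul trmxK.
by rewrite -expr2 sqr_ge0.
Qed.

Lemma limit_le (R : realType) (H : R -> R) (w : R) : {for 0, continuous H} ->
  (forall e, 0 < e -> w <= H e) -> w <= H 0.
Proof.
move=> Hc Hw; rewrite leNgt; apply/negP => Hlt.
have := Hc; move/cvgrPdist_lt => /(_ (w - H 0)); rewrite subr_gt0 => /(_ Hlt).
move/nbhs_ballP => [d d0 Hd].
have : ball (0 : R) d (d / 2).
  by rewrite /ball /= sub0r normrN ger0_norm ?divr_ge0 ?ltW // ltr_pdivrMr // ltr_pMr // ltr1n.
move/Hd => /=; have := Hw (d / 2) (divr_gt0 d0 (ltr0Sn _ 1)).
move=> h1 h2; have := ler_norm (H (d / 2) - H 0); rewrite distrC; lra.
Qed.

Section Main.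
Variable R : realType.
Variables m n : nat.
Variable A : 'M[R]_(m, n).
Variable p : rat.
Hypothesis p2 : 2 < ratr p :> R.
Variable X0 : 'M[R]_(m + n).
Hypothesis FX0 : pv_feasible p X0.
Hypothesis maxX0 : forall Y, pv_feasible p Y -> frob (bigA A) Y <= frob (bigA A) X0.

Local Notation r := (ratr p : R).
Local Notation B := (bigA A).
Let V := frob B X0.

Let r0 : 0 < r. Proof. exact: lt_trans p2. Qed.
Let q0 : 0 < r / 2. Proof. by rewrite divr_gt0. Qed.

Lemma V_ge0 : 0 <= V.
Proof.
have F0 : pv_feasible p (0 : 'M[R]_(m + n)).
  split; first split.
  - by rewrite trmx0.
  - by move=> x; rewrite mulmx0 mul0mx mxE.
  by split; rewrite big1 // => i _; rewrite mxE normr0 powR0 ?gt_eqF.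
by have := maxX0 F0; rewrite frob0.
Qed.

Definition SI (Y : 'M[R]_(m + n)) := \sum_(i < m + n | (i < m)%N) `|Y i i| `^ (r / 2).
Definition SJ (Y : 'M[R]_(m + n)) := \sum_(i < m + n | (m <= i)%N) `|Y i i| `^ (r / 2).

Lemma S0_frob (Y : 'M[R]_(m + n)) (P : pred 'I_(m + n)) : psd Y ->
  (forall i j, ~~ P i -> ~~ P j -> B i j = 0) ->
  \sum_(i < m + n | P i) `|Y i i| `^ (r / 2) = 0 -> frob B Y = 0.
Proof.
move=> pY HB S0.
have Yi i : P i -> Y i i = 0.
  move=> Pi; move/eqP: S0; rewrite psumr_eq0 => [/allP /(_ i) H|]; last first.
    by move=> *; apply: powR_ge0.
  have := H (mem_index_enum _); rewrite Pi /= => /eqP /powR_eq0_eq0 /eqP.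
  by rewrite normr_eq0 => /eqP.
rewrite frobE big1 // => i _; rewrite big1 // => j _.
case Pi: (P i); first by rewrite (psd_offdiag0 j pY (Yi i Pi)) mulr0.
case Pj: (P j).
  have sY k l : Y k l = Y l k by rewrite -{1}pY.1 mxE.
  by rewrite sY (psd_offdiag0 i pY (Yi j Pj)) mulr0.
by rewrite HB ?Pi ?Pj // mul0r.
Qed.


Lemma sum_scale (Y : 'M[R]_(m + n)) (P : pred 'I_(m + n)) (c : R) : 0 <= c ->
  \sum_(i < m + n | P i) `|c * Y i i| `^ (r / 2) =
  c `^ (r / 2) * \sum_(i < m + n | P i) `|Y i i| `^ (r / 2).
Proof.
move=> c0; rewrite mulr_sumr; apply: eq_bigr => i _.
by rewrite normrM (ger0_norm c0) powRM.
Qed.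

Lemma powR_self_inv (S : R) : 0 < S -> ((S `^ (2 / r))^-1) `^ (r / 2) = S^-1.
Proof.
move=> S0.
rewrite [RHS](_ : _ = S `^ (-1)); last by rewrite powR_inv1 // ltW.
rewrite -(@powR_inv1 _ (S `^ (2 / r))) ?powR_ge0 // -!powRrM.
by congr (powR _ _); field; rewrite gt_eqF.
Qed.

Lemma SL (Y : 'M[R]_(m + n)) : psd Y ->
  frob B Y <= V / 2 * (SI Y `^ (2 / r) + SJ Y `^ (2 / r)).
Proof.
move=> pY.
have rhs0 : 0 <= V / 2 * (SI Y `^ (2 / r) + SJ Y `^ (2 / r)).
  by apply: mulr_ge0; [apply: divr_ge0 => //; apply: V_ge0 | apply: addr_ge0; apply: powR_ge0].
have SI0 : 0 <= SI Y by apply: sumr_ge0 => *; apply: powR_ge0.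
have SJ0 : 0 <= SJ Y by apply: sumr_ge0 => *; apply: powR_ge0.
have [SIe|SIn] := eqVneq (SI Y) 0.
  rewrite (@S0_frob Y (fun i => (i < m)%N)) //.
  by move=> i j /negbTE hi /negbTE hj; apply: bigA_blk; rewrite hi hj.
have [SJe|SJn] := eqVneq (SJ Y) 0.
  rewrite (@S0_frob Y (fun i => (m <= i)%N)) //.
  by move=> i j; rewrite -!ltnNge => hi hj; apply: bigA_blk; rewrite hi hj.
have SIp : 0 < SI Y by rewrite lt_def SIn.
have SJp : 0 < SJ Y by rewrite lt_def SJn.
set NI := SI Y `^ (2 / r); set NJ := SJ Y `^ (2 / r).
have NIp : 0 < NI by apply: powR_gt0.
have NJp : 0 < NJ by apply: powR_gt0.
set sI := Num.sqrt NI; set sJ := Num.sqrt NJ.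
have sIp : 0 < sI by rewrite sqrtr_gt0.
have sJp : 0 < sJ by rewrite sqrtr_gt0.
pose d (i : 'I_(m + n)) := if (i < m)%N then sI^-1 else sJ^-1.
pose Y' := \matrix_(i, j) (d i * d j * Y i j).
have FY' : pv_feasible p Y'.
  split; first exact: scale_psd.
  split.
    rewrite (eq_bigr (fun i => `|NI^-1 * Y i i| `^ (r / 2))); last first.
      move=> i hi; rewrite mxE /d hi -invfM -expr2 sqr_sqrtr //; exact: ltW.
    rewrite sum_scale; last by rewrite invr_ge0 ltW.
    by rewrite powR_self_inv // -/(SI Y) mulVf.
  rewrite (eq_bigr (fun i => `|NJ^-1 * Y i i| `^ (r / 2))); last first.
    move=> i hi; rewrite mxE /d ltnNge hi /= -invfM -expr2 sqr_sqrtr //; exact: ltW.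
  rewrite sum_scale; last by rewrite invr_ge0 ltW.
  by rewrite powR_self_inv // -/(SJ Y) mulVf.
have fY' : frob B Y' = (sI * sJ)^-1 * frob B Y.
  rewrite !frobE mulr_sumr; apply: eq_bigr => i _; rewrite mulr_sumr.
  apply: eq_bigr => j _; rewrite [Y' i j]mxE /d.
  case hi: (i < m)%N; case hj: (j < m)%N.
  - by rewrite bigA_blk ?hi ?hj // !mul0r mulr0.
  - by rewrite invfM; ring.
  - by rewrite invfM; ring.
  - by rewrite bigA_blk ?hi ?hj // !mul0r mulr0.
have := maxX0 FY'; rewrite fY' -/V.
rewrite ler_pdivrMl ?mulr_gt0 // => H.
apply: (le_trans H).
have : 0 <= (sI - sJ) ^+ 2 by apply: sqr_ge0.
have eI : sI ^+ 2 = NI by rewrite sqr_sqrtr // ltW.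
have eJ : sJ ^+ 2 = NJ by rewrite sqr_sqrtr // ltW.
rewrite sqrrB eI eJ => h.
have V0 := V_ge0.
have -> : V / 2 * (NI + NJ) = V * ((NI + NJ) / 2) by ring.
rewrite [_ * V]mulrC; apply: ler_wpM2l => //; lra.
Qed.


Let q1 : 1 < r / 2.
Proof. by rewrite ltr_pdivlMr // mul1r. Qed.

Lemma SI_pert (P : pred 'I_(m + n)) e (z : 'cV[R]_(m + n)) :
  0 < e -> \sum_(i | P i) `|X0 i i| `^ (r / 2) <= 1 ->
  (\sum_(i | P i) `|X0 i i + e * z i 0 ^+ 2| `^ (r / 2)) `^ (2 / r) <=
  1 + e * \sum_(i | P i) z i 0 ^+ 2 * `|X0 i i + e * z i 0 ^+ 2| `^ (r / 2 - 1).
Proof.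
move=> e0 S1.
set K := \sum_(i | P i) z i 0 ^+ 2 * _.
have K0 : 0 <= K by apply: sumr_ge0 => i _; apply: mulr_ge0; [apply: sqr_ge0 | apply: powR_ge0].
have step1 : \sum_(i | P i) `|X0 i i + e * z i 0 ^+ 2| `^ (r / 2) <= 1 + r / 2 * e * K.
  apply: (@le_trans _ _ (\sum_(i | P i) (`|X0 i i| `^ (r / 2) + r / 2 * e * (z i 0 ^+ 2 * `|X0 i i + e * z i 0 ^+ 2| `^ (r / 2 - 1))))).
    apply: ler_sum => i _.
    have a0 : 0 <= X0 i i by apply: psd_diag_ge0 FX0.1.
    have b0 : 0 <= e * z i 0 ^+ 2 by apply: mulr_ge0; [apply: ltW | apply: sqr_ge0].
    rewrite !ger0_norm ?addr_ge0 //.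
    have := @tangent_powR R (r / 2) (X0 i i) (X0 i i + e * z i 0 ^+ 2) q1.
    rewrite lerDl b0 a0 /= => /(_ isT) H; apply: (le_trans H).
    by rewrite le_eqVlt; apply/orP; left; apply/eqP; ring.
  rewrite big_split /= -mulr_sumr; apply: lerD => //.
have r21 : 0 < 2 / r <= 1.
  by rewrite divr_gt0 //= ler_pdivrMr // mul1r ltW.
apply: (@le_trans _ _ ((1 + r / 2 * e * K) `^ (2 / r))).
  apply: ge0_ler_powR => //; first by rewrite ltW // divr_gt0.
    by rewrite nnegrE; apply: sumr_ge0 => *; apply: powR_ge0.
  by rewrite nnegrE addr_ge0 // mulr_ge0 // mulr_ge0 // ltW.
apply: (le_trans (bern_concave r21 _)); first by rewrite mulr_ge0 // mulr_ge0 // ltW.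
rewrite le_eqVlt; apply/orP; left; apply/eqP; field; rewrite gt_eqF.
all: try exact: r0. all: try done.
Qed.


Lemma KKT (z : 'cV[R]_(m + n)) :
  bf B z z <= \sum_i (V / 2 * X0 i i `^ (r / 2 - 1)) * z i 0 ^+ 2.
Proof.
set w := bf B z z.
have c0 : 0 < r / 2 - 1 by rewrite subr_gt0.
pose H (e : R) := V / 2 * \sum_i z i 0 ^+ 2 * `|X0 i i + e * z i 0 ^+ 2| `^ (r / 2 - 1).
have -> : \sum_i (V / 2 * X0 i i `^ (r / 2 - 1)) * z i 0 ^+ 2 = H 0.
  rewrite /H mulr_sumr; apply: eq_bigr => i _.
  rewrite mul0r addr0 ger0_norm; last exact: psd_diag_ge0 FX0.1.
  ring.
apply: limit_le.
  apply: cont_cmul; apply: cont_sum => i; apply: cont_cmul.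
  move=> e; apply: (@continuous_comp _ _ _ (fun e : R => X0 i i + e * z i 0 ^+ 2) (fun x => `|x| `^ (r / 2 - 1))); last exact: cont_abspow.
  apply: (@continuousD _ _ _ (fun=> X0 i i) (fun e : R => e * z i 0 ^+ 2)).
    exact: cst_continuous.
  have -> : (fun e : R => e * z i 0 ^+ 2) = (fun e => z i 0 ^+ 2 * id e).
    by apply/funext => x; rewrite mulrC.
  by apply: cont_cmul => x.
move=> e e0.
pose Y := X0 + e *: (z *m z^T).
have pY : psd Y by apply: psd_add; [exact: FX0.1 | apply: psd_scale; [exact: ltW | exact: psd_rank1]].
have Yd i : Y i i = X0 i i + e * z i 0 ^+ 2.
  by rewrite !mxE big_ord1 mxE expr2.
have fY : frob B Y = V + e * w by rewrite frobD frobZ frob_rank1 bigA_sym.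
have := SL pY; rewrite fY /SI /SJ.
rewrite (eq_bigr (fun i => `|X0 i i + e * z i 0 ^+ 2| `^ (r / 2))); last by move=> i _; rewrite Yd.
rewrite [X in _ <= _ * (_ + (X `^ _))](eq_bigr (fun i => `|X0 i i + e * z i 0 ^+ 2| `^ (r / 2))); last by move=> i _; rewrite Yd.
have [_ [FI FJ]] := FX0.
have hI := SI_pert z e0 FI.
have hJ := SI_pert z e0 FJ.
move=> h.
have V0 := V_ge0.
set KI := \sum_(i < m + n | (i < m)%N) z i 0 ^+ 2 * _ in hI.
set KJ := \sum_(i < m + n | (m <= i)%N) z i 0 ^+ 2 * _ in hJ.
have HE : H e = V / 2 * (KI + KJ).
  rewrite /H (bigID (fun i : 'I_(m + n) => (i < m)%N)) /=.
  congr (_ * (_ + _)); apply: eq_bigl => i; by rewrite -leqNgt.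
rewrite HE.
have h2 : V + e * w <= V / 2 * (1 + e * KI + (1 + e * KJ)).
  apply: (le_trans h); apply: ler_wpM2l; first by apply: divr_ge0.
  exact: lerD.
have : e * w <= e * (V / 2 * (KI + KJ)).
  have -> : e * (V / 2 * (KI + KJ)) = V / 2 * (1 + e * KI + (1 + e * KJ)) - V by field.
  lra.
by rewrite ler_pM2l.
Qed.

End Main.


Section Weak.
Variable R : realType.
Variables m n : nat.
Variable A : 'M[R]_(m, n).
Variable p : rat.
Hypothesis p2 : 2 < ratr p :> R.

Lemma frob_diag_sub (v : 'rV[R]_(m + n)) (X : 'M[R]_(m + n)) :
  frob (diag_mx v - bigA A) X = \sum_i v 0 i * X i i - frob (bigA A) X.
Proof.
set BB := bigA A.
rewrite !frobE -sumrB; apply: eq_bigr => i _.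
rewrite (eq_bigr (fun j => (v 0 i *+ (i == j)) * X i j - BB i j * X i j)); last first.
  by move=> j _; rewrite [(_ - BB) i j]mxE [(- BB) i j]mxE mxE mulrBl.
rewrite sumrB; congr (_ - _).
rewrite (bigD1 i) //= eqxx mulr1n big1 ?addr0 // => j /negbTE; rewrite eq_sym => ->.
by rewrite mulr0n mul0r.
Qed.

Lemma weak_dual (u1 u2 : R) (t v : 'rV[R]_(m + n)) (X : 'M[R]_(m + n)) :
  dual_feasible A p u1 u2 t v -> pv_feasible p X -> frob (bigA A) X <= dual_obj p u1 u2 t.
Proof.
move=> [C1 [C2 [u10 [u20 [t0 Pd]]]]] [pX [HI HJ]].
have h1 := frob_psd_ge0 Pd pX.
rewrite frob_diag_sub subr_ge0 in h1.
apply: (le_trans h1).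
have v0 i : 0 <= v 0 i.
  have := psd_diag_ge0 i Pd.
  have -> : (diag_mx v - bigA A) i i = v 0 i.
    set BB := bigA A.
    by rewrite [(_ - BB) i i]mxE [(- BB) i i]mxE /BB bigA_blk // subr0 mxE eqxx mulr1n.
  done.
have x0 i : 0 <= X i i := psd_diag_ge0 i pX.
rewrite /dual_obj (bigID (fun i : 'I_(m + n) => (i < m)%N)) /=.
rewrite [X in _ <= _ + _ + _ * X](bigID (fun i : 'I_(m + n) => (i < m)%N)) /=.
have eJ (F : 'I_(m + n) -> R) : \sum_(i < m + n | ~~ (i < m)%N) F i = \sum_(i < m + n | (m <= i)%N) F i.
  by apply: eq_bigl => i /=; rewrite ltnNge negbK.
rewrite !eJ.
have yI : \sum_(i < m + n | (i < m)%N) v 0 i * X i i <= u1 + theta_p R p * \sum_(i < m + n | (i < m)%N) t 0 i.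
  apply: (@le_trans _ _ (\sum_(i < m + n | (i < m)%N) (u1 * `|X i i| `^ (ratr p / 2) + theta_p R p * t 0 i))).
    apply: ler_sum => i hi; rewrite ger0_norm //.
    exact: (young_term p2 (v0 i) (x0 i) u10 (t0 i) (C1 i hi)).
  rewrite big_split /= -!mulr_sumr lerD2r.
  by rewrite -[leRHS]mulr1; apply: ler_wpM2l.
have yJ : \sum_(i < m + n | (m <= i)%N) v 0 i * X i i <= u2 + theta_p R p * \sum_(i < m + n | (m <= i)%N) t 0 i.
  apply: (@le_trans _ _ (\sum_(i < m + n | (m <= i)%N) (u2 * `|X i i| `^ (ratr p / 2) + theta_p R p * t 0 i))).
    apply: ler_sum => i hi; rewrite ger0_norm //.
    exact: (young_term p2 (v0 i) (x0 i) u20 (t0 i) (C2 i hi)).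
  rewrite big_split /= -!mulr_sumr lerD2r.
  by rewrite -[leRHS]mulr1; apply: ler_wpM2l.
have := lerD yI yJ; lra.
Qed.

End Weak.


Section Construct.
Variable R : realType.
Variables m n : nat.
Variable A : 'M[R]_(m, n).
Variable p : rat.
Hypothesis p2 : 2 < ratr p :> R.
Variable X0 : 'M[R]_(m + n).
Hypothesis FX0 : pv_feasible p X0.
Hypothesis maxX0 : forall Y, pv_feasible p Y -> frob (bigA A) Y <= frob (bigA A) X0.

Lemma dual_construct : exists (u1 u2 : R) (t v : 'rV[R]_(m + n)),
  dual_feasible A p u1 u2 t v /\ dual_obj p u1 u2 t <= frob (bigA A) X0.
Proof.
set V := frob (bigA A) X0.
set r := (ratr p : R).
have r0 : 0 < r by apply: lt_trans p2.
have r20 : 0 < r - 2 by rewrite subr_gt0.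
have V0 : 0 <= V := V_ge0 p2 maxX0.
set e := 2 / (r - 2).
set qs := r / (r - 2).
have e0 : 0 < e by rewrite divr_gt0.
have qs0 : 0 < qs by rewrite divr_gt0.
pose vv := \row_(i < m + n) (V / 2 * X0 i i `^ (r / 2 - 1)).
pose u := V / r.
pose tt := \row_(i < m + n) (vv 0 i `^ qs / u `^ e).
have u0 : 0 <= u by rewrite divr_ge0 // ltW.
have C i : vv 0 i `^ qs <= tt 0 i * u `^ e.
  have [V0'|Vp] := eqVneq V 0.
    rewrite /vv mxE V0' mul0r mul0r powR0 ?gt_eqF //.
    by apply: mulr_ge0; [rewrite mxE; apply: divr_ge0; apply: powR_ge0 | apply: powR_ge0].
  have up : 0 < u by rewrite divr_gt0 // lt_def Vp V0.
  rewrite [tt 0 i]mxE divfK //; rewrite gt_eqF // powR_gt0 //.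
exists u, u, tt, vv; split.
  split; first by move=> i _; apply: C.
  split; first by move=> i _; apply: C.
  split => //; split => //; split.
    by move=> i; rewrite mxE; apply: divr_ge0; apply: powR_ge0.
  split.
    by rewrite linearB /= tr_diag_mx bigA_sym.
  move=> z; rewrite -/(bf _ z z).
  set BB := bigA A.
  have -> : diag_mx vv - BB = diag_mx vv + (- BB) by [].
  rewrite bfMD bfMN subr_ge0.
  apply: (le_trans (KKT p2 FX0 maxX0 z)).
  rewrite bfE le_eqVlt; apply/orP; left; apply/eqP; apply: eq_bigr => i _.
  rewrite (bigD1 i) //= big1 ?addr0.
    by rewrite !mxE eqxx mulr1n; ring.
  by move=> j /negbTE ji; rewrite !mxE eq_sym ji mulr0n mulr0 mul0r.
rewrite /dual_obj.
have th : theta_p R p = thetar r by [].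
rewrite th.
have [V0'|Vp] := eqVneq V 0.
  rewrite big1; last first.
    move=> i _; rewrite mxE /u V0' mul0r powR0 ?gt_eqF // invr0 mulr0 //.
  by rewrite /u V0' mul0r !add0r mulr0.
have Vp' : 0 < V by rewrite lt_def Vp V0.
have V2 : 0 < V / 2 by rewrite divr_gt0.
have ttE i : tt 0 i = (V / 2) `^ qs / u `^ e * `|X0 i i| `^ (r / 2).
  have a0 : 0 <= X0 i i := psd_diag_ge0 i FX0.1.
  rewrite !mxE powRM; [|exact: ltW V2|exact: powR_ge0].
  rewrite -powRrM ger0_norm //.
  have -> : (r / 2 - 1) * qs = r / 2 by rewrite /qs; field; rewrite !gt_eqF.
  by rewrite mulrAC.
rewrite (eq_bigr _ (fun i _ => ttE i)) -mulr_sumr.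
have S2 : \sum_i `|X0 i i| `^ (r / 2) <= 2.
  have [_ [FI FJ]] := FX0.
  rewrite (bigID (fun i : 'I_(m + n) => (i < m)%N)) /=.
  have -> : \sum_(i < m + n | ~~ (i < m)%N) `|X0 i i| `^ (r / 2) =
            \sum_(i < m + n | (m <= i)%N) `|X0 i i| `^ (r / 2).
    by apply: eq_bigl => i /=; rewrite ltnNge negbK.
  have -> : (2 : R) = 1 + 1 by [].
  exact: lerD.
have c0 : 0 <= (V / 2) `^ qs / u `^ e by apply: divr_ge0; apply: powR_ge0.
have th0 : 0 < thetar r := thetar_gt0 p2.
apply: (@le_trans _ _ (u + u + thetar r * ((V / 2) `^ qs / u `^ e * 2))).
  by rewrite lerD2l; apply: ler_wpM2l; [apply: ltW | apply: ler_wpM2l].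
have gp : 0 < 2 / r by rewrite divr_gt0.
have uE : u = V / 2 * (2 / r) by rewrite /u; field; rewrite gt_eqF.
have ueE : u `^ e = (V / 2) `^ e * (2 / r) `^ e by rewrite uE powRM ?ltW.
have qsE : (V / 2) `^ qs = (V / 2) `^ e * (V / 2).
  have -> : qs = e + 1 by rewrite /qs /e; field; rewrite gt_eqF.
  rewrite powRD; last by rewrite implybE (gt_eqF V2) orbT.
  by rewrite powRr1 // ltW.
have Ve0 : 0 < (V / 2) `^ e by apply: powR_gt0.
have ge0 : 0 < (2 / r) `^ e by apply: powR_gt0.
rewrite thetarE // qsE ueE uE.
rewrite le_eqVlt; apply/orP; left; apply/eqP.
by field; rewrite !gt_eqF.
Qed.

End Construct.


End PilotHelpers.
Import PilotHelpers.

Theorem proposition3p3 (R : realType) (m n : nat) (A : 'M[R]_(m, n)) (p : rat)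
  (hp : 2 < p) :
  0 < theta_p R p /\
  (* the primal maximum is attained and equals pv_norm *)
  (exists X : 'M[R]_(m + n), pv_feasible p X /\ frob (bigA A) X = pv_norm A p) /\
  (forall X : 'M[R]_(m + n), pv_feasible p X -> frob (bigA A) X <= pv_norm A p) /\
  (* the dual minimum is attained and equals pv_norm (strong duality) *)
  (exists (u1 u2 : R) (t v : 'rV[R]_(m + n)),
     dual_feasible A p u1 u2 t v /\ dual_obj p u1 u2 t = pv_norm A p) /\
  (forall (u1 u2 : R) (t v : 'rV[R]_(m + n)),
     dual_feasible A p u1 u2 t v -> pv_norm A p <= dual_obj p u1 u2 t).
Proof.
have p2 : 2 < ratr p :> R.
  have : ratr 2 < ratr p :> R by rewrite ltr_rat.
  by rewrite rmorph_nat.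
have [X0 [FX0 maxX0]] := pv_exists_max A p2.
have hsup : pv_norm A p = frob (bigA A) X0.
  rewrite /pv_norm; apply/eqP; rewrite eq_le; apply/andP; split.
    apply: ge_sup; first by exists (frob (bigA A) X0); exists X0.
    by move=> y [Y FY <-]; exact: maxX0 FY.
  apply: ub_le_sup; last by exists X0.
  by exists (frob (bigA A) X0) => y [Y FY <-]; exact: maxX0 FY.
split; first exact: thetar_gt0 p2.
split; first by exists X0.
split; first by move=> X FX; rewrite hsup; exact: maxX0.
split.
  have [u1 [u2 [t [v [Df Dle]]]]] := dual_construct p2 FX0 maxX0.
  exists u1, u2, t, v; split => //; rewrite hsup.
  by apply/eqP; rewrite eq_le Dle (weak_dual p2 Df FX0).
by move=> u1 u2 t v Df; rewrite hsup; exact: (weak_dual p2 Df FX0).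
Qed.
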